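(* Let $M\ge1$ and $\chi,\tilde\chi\in\widetilde{\mathcal W}^-\cup\mathcal W^+_M$ with $\tilde\chi\le\chi$, and let $Q=Q_{\chi,\tilde\chi}$. Then the function $h(t)=\dfrac{Q(t)^2}{t}$ is non-increasing on $\mathbb R_{>0}$.
   Context: $\widetilde{\mathcal W}^-$: convex non-decreasing $\chi:\mathbb R_{\le0}\to\mathbb R_{\le0}$, $\chi(0)=0$, $\chi\not\equiv0$. $\mathcal W^+_M$: increasing concave $\chi:\mathbb R_{\le0}\to\mathbb R_{\le0}$, $\chi(0)=0$, $\chi<0$ on $(-\infty,0)$, $|t\chi'(t)|\le M|\chi(t)|$ for $t\le0$. For $\epsilon>0$, $Q_0(\epsilon)=\sup_{t\le-1}\chi(\epsilon t)/\tilde\chi(t)$; $Q(t)=1$ for $t\ge1$; for $0<t<1$, $Q(t)=(Q_0(t)/Q_0(1))^{1/2}$ if $\chi\in\widetilde{\mathcal W}^-$ and $Q(t)=t^{1/2}$ if $\chi\in\mathcal W^+_M$; $Q(0)=\lim_{s\to0^+}Q(s)$. *)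

(* Defs.v *)
From HB Require Import structures.
From mathcomp Require Import all_boot all_order all_algebra.
From mathcomp Require Import all_classical all_reals all_analysis.
Set Implicit Arguments. Unset Strict Implicit. Unset Printing Implicit Defensive.
Import Order.TTheory GRing.Theory Num.Theory.
Import numFieldNormedType.Exports.
Local Open Scope classical_set_scope.
Local Open Scope ring_scope.

Section Weights.
Variable R : realType.
Implicit Types (chi chit : R -> R) (M t eps : R).

(* functions R_{<=0} -> R_{<=0} are modelled as R -> R; only values on t <= 0 matter *)
Definition maps_npos chi := forall t, t <= 0 -> chi t <= 0.

Definition convex_npos chi := forall x y a, x <= 0 -> y <= 0 -> 0 <= a -> a <= 1 ->
  chi (a * x + (1 - a) * y) <= a * chi x + (1 - a) * chi y.

Definition concave_npos chi := forall x y a, x <= 0 -> y <= 0 -> 0 <= a -> a <= 1 ->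
  a * chi x + (1 - a) * chi y <= chi (a * x + (1 - a) * y).

Definition Wminus chi : Prop :=
  [/\ maps_npos chi, convex_npos chi,
      (forall s t, s <= t -> t <= 0 -> chi s <= chi t),
      chi 0 = 0 &
      exists t, t <= 0 /\ chi t != 0].

Definition WplusM M chi : Prop :=
  [/\ maps_npos chi, concave_npos chi,
      (forall s t, s < t -> t <= 0 -> chi s < chi t),
      chi 0 = 0 /\ (forall t, t < 0 -> chi t < 0) &
      (forall t, t < 0 -> derivable chi t 1 -> `|t * derive1 chi t| <= M * `|chi t|)].

Definition Q0 chi chit eps : R :=
  sup [set chi (eps * t) / chit t | t in `]-oo, -1]].

Definition Q chi chit t : R :=
  if 1 <= t then 1
  else if asbool (Wminus chi) then Num.sqrt (Q0 chi chit t / Q0 chi chit 1)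
  else Num.sqrt t.

End Weights.

(* Main.v *)
Require Import Defs.
From HB Require Import structures.
From mathcomp Require Import all_boot all_order all_algebra.
From mathcomp Require Import all_classical all_reals all_analysis.
From mathcomp Require Import ring lra.
Import Order.TTheory GRing.Theory Num.Theory.
Local Open Scope classical_set_scope.
Local Open Scope ring_scope.

Section Aux.
Variable R : realType.
Variables chi chit : R -> R.
Hypothesis Wc : Wminus chi.
Hypothesis hle : forall t, t <= 0 -> chit t <= chi t.

Lemma L1 {a x : R} : 0 <= a -> a <= 1 -> x <= 0 -> chi (a * x) <= a * chi x.
Proof.
case: Wc => _ cv _ c0 _ a0 a1 x0.
have := cv x 0 a x0 (lexx _) a0 a1.
by rewrite mulr0 addr0 c0 mulr0 addr0.
Qed.

Lemma Lneg {u : R} : u < 0 -> chi u < 0.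
Proof.
case: Wc => np cv mono c0 [t0 [t0le t0n]] u0.
have ct0 : chi t0 < 0 by rewrite lt_neqAle t0n np.
have t0n0 : t0 < 0.
  rewrite lt_neqAle t0le andbT; apply/negP => /eqP e.
  by move: t0n; rewrite e c0 eqxx.
case: (lerP u t0) => hu.
  exact: le_lt_trans (mono _ _ hu t0le) ct0.
have a0 : 0 < u / t0.
  by rewrite ltr_ndivlMr // mul0r.
have a1 : u / t0 <= 1.
  by rewrite ler_ndivrMr // mul1r ltW.
have := L1 (ltW a0) a1 t0le.
rewrite divfK ?(lt_eqF t0n0) // => h.
apply: le_lt_trans h _.
by rewrite pmulr_rlt0.
Qed.

Lemma chitneg {u : R} : u < 0 -> chit u < 0.
Proof. move=> u0; have h1 := hle _ (ltW u0); have h2 := Lneg u0; lra. Qed.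

Lemma Sbnd {e : R} : 0 < e -> e <= 1 ->
  has_ubound [set chi (e * t) / chit t | t in `]-oo, -1]%classic].
Proof.
case: Wc => np cv mono c0 _ e0 e1.
exists 1 => _ [u hu <-].
move: hu; rewrite /= in_itv /= => hu.
have u0 : u < 0 by lra.
rewrite ler_ndivrMr ?chitneg // mul1r.
apply: le_trans (hle _ (ltW u0)) _.
apply: mono.
  rewrite -[X in X <= _]mul1r; apply: ler_wnM2r; lra.
by rewrite pmulr_rle0 //; exact: ltW.
Qed.

Lemma Q0pos {e : R} : 0 < e -> e <= 1 -> 0 < Q0 chi chit e.
Proof.
move=> e0 e1.
have hb := Sbnd e0 e1.
have hm : [set chi (e * t) / chit t | t in `]-oo, -1]%classic] (chi (e * -1) / chit (-1)).
  by exists (-1) => //=; rewrite in_itv /=; lra.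
have h := ub_le_sup hb hm.
rewrite /Q0; apply: lt_le_trans h.
rewrite mulrN1 ltr_ndivlMr ?mul0r; last by apply: chitneg; lra.
apply: Lneg; lra.
Qed.

Lemma Q0mono {s t : R} : 0 < s -> s <= t -> s <= 1 ->
  Q0 chi chit t / t <= Q0 chi chit s / s.
Proof.
move=> s0 st s1.
have t0 : 0 < t by lra.
have hb := Sbnd s0 s1.
have key : Q0 chi chit t <= t / s * Q0 chi chit s.
  apply: ge_sup.
    exists (chi (t * -1) / chit (-1)); exists (-1) => //=; rewrite in_itv /=; lra.
  move=> _ [u hu <-].
  have hu' : u <= -1 by move: hu; rewrite /= in_itv.
  have u0 : u < 0 by lra.
  have ts0 : 0 < t / s by apply: divr_gt0.
  apply: (@le_trans _ _ (t / s * (chi (s * u) / chit u))); last first.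
    have hm : [set chi (s * t) / chit t | t in `]-oo, -1]%classic] (chi (s * u) / chit u).
      by exists u.
    rewrite ler_pM2l // /Q0; by have := ub_le_sup hb hm.
  rewrite mulrA ler_ndivlMr ?chitneg // divfK ?(lt_eqF (chitneg u0)) //.
  have a0 : 0 <= s / t by apply: divr_ge0; lra.
  have a1 : s / t <= 1 by rewrite ler_pdivrMr // mul1r.
  have h := L1 a0 a1 (x := t * u) ltac:(rewrite pmulr_rle0 //; lra).
  have E : s / t * (t * u) = s * u by field; rewrite (gt_eqF t0).
  rewrite E in h.
  have e : chi (t * u) = t / s * (s / t * chi (t * u)).
    by field; rewrite (gt_eqF t0) (gt_eqF s0).
  rewrite [X in _ <= X]e; rewrite ler_pM2l //.
have -> : Q0 chi chit s / s = (t / s * Q0 chi chit s) / t.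
  by field; rewrite (gt_eqF t0) (gt_eqF s0).
by rewrite ler_pM2r ?invr_gt0.
Qed.

End Aux.

Theorem lemma3p6 (R : realType) (M : R) (chi chit : R -> R) :
  1 <= M ->
  (Wminus chi \/ WplusM M chi) ->
  (Wminus chit \/ WplusM M chit) ->
  (forall t, t <= 0 -> chit t <= chi t) ->
  forall s t, 0 < s -> s <= t ->
    (Q chi chit t) ^+ 2 / t <= (Q chi chit s) ^+ 2 / s.
Proof.
move=> _ _ _ hle s t s0 st.
have t0 : 0 < t by lra.
rewrite /Q.
case: (lerP 1 s) => s1.
  have -> : 1 <= t by lra.
  by rewrite expr1n !mul1r lef_pV2 ?posrE.
case: (lerP 1 t) => t1.
  rewrite expr1n mul1r.
  case: (boolP (asbool (Wminus chi))) => /asboolP W.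
    have q1 := Q0pos _ _ _ W hle ltr01 (lexx _).
    have qs := Q0pos _ _ _ W hle s0 (ltW s1).
    have hq : 0 <= Q0 chi chit s / Q0 chi chit 1 by apply: divr_ge0; apply: ltW.
    rewrite sqr_sqrtr //.
    have := Q0mono _ _ _ W hle s0 (ltW s1) (ltW s1).
    rewrite divr1 => h.
    apply: (@le_trans _ _ 1).
      by rewrite invf_le1.
    by rewrite mulrAC ler_pdivlMr // mul1r.
  have hs : 0 <= s by apply: ltW.
  rewrite sqr_sqrtr // divff ?(gt_eqF s0) //.
  by rewrite invf_le1.
case: (boolP (asbool (Wminus chi))) => /asboolP W.
  have q1 := Q0pos _ _ _ W hle ltr01 (lexx _).
  have qs := Q0pos _ _ _ W hle s0 (ltW s1).
  have qt := Q0pos _ _ _ W hle t0 (ltW t1).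
  have hqs : 0 <= Q0 chi chit s / Q0 chi chit 1 by apply: divr_ge0; apply: ltW.
  have hqt : 0 <= Q0 chi chit t / Q0 chi chit 1 by apply: divr_ge0; apply: ltW.
  rewrite !sqr_sqrtr // [X in X <= _]mulrAC [X in _ <= X]mulrAC.
  rewrite ler_pM2r ?invr_gt0 //.
  by have := Q0mono _ _ _ W hle s0 st (ltW s1).
have hs : 0 <= s by apply: ltW.
have ht : 0 <= t by apply: ltW.
rewrite !sqr_sqrtr // !divff ?(gt_eqF s0) ?(gt_eqF t0) //.
Qed.
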